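(* Let $h$ be the two-dimensional Euclid's hat. Define the minimal specific energy $$e(h)=\inf_{n\ge2}\ \inf_{(\zeta_1,\dots,\zeta_n)}\frac{1}{n}U_n(\zeta_1,\dots,\zeta_n;h)$$ and the constrained (modified) minimal specific energy $$\bar e(h)=\inf_{n\ge2}\ \inf_{\substack{(\zeta_1,\dots,\zeta_n)\\ \sigma_1+\dots+\sigma_n\neq0}}\frac{1}{n-1}U_n(\zeta_1,\dots,\zeta_n;h),$$ the inner infima running over all $\zeta_j=(\sigma_j,x_j)\in\{-1,1\}\times\mathbb{R}^2$. Then $e(h)=\bar e(h)=-1/2$. The value $-1/2$ is attained for $e$ by any configuration with $n$ even, $\sum_j\sigma_j=0$ and all $x_j$ equal, and for $\bar e$ by any configuration with $n$ odd, $|\sum_j\sigma_j|=1$ and all $x_j$ equal.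
   Context: The Euclid's hat is $h:[0,\infty)\to[0,1]$, $h(w)=\frac{2}{\pi}(\arccos w-w\sqrt{1-w^2})$ for $0\le w\le1$ and $h(w)=0$ for $w>1$. For $\zeta_j=(\sigma_j,x_j)\in\{-1,1\}\times\mathbb{R}^2$, $U_n(\zeta_1,\dots,\zeta_n;h)=\sum_{1\le i<j\le n}\sigma_i\sigma_j h(|x_i-x_j|)$. *)

(* Defs.v *)
From Stdlib Require Import Reals Lra.
Open Scope R_scope.

(* Euclid's hat on [0,oo): h(w) = 2/PI (acos w - w sqrt(1-w^2)) for 0<=w<=1, 0 for w>1.
   (Only applied to distances, which are >= 0.) *)
Definition euclid_hat (w : R) : R :=
  if Rle_dec w 1 then 2 / PI * (acos w - w * sqrt (1 - w ^ 2)) else 0.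

Definition dist2 (p q : R * R) : R :=
  sqrt ((fst p - fst q) ^ 2 + (snd p - snd q) ^ 2).

Fixpoint sumR (n : nat) (f : nat -> R) : R :=
  match n with
  | O => 0
  | S k => sumR k f + f k
  end.

Definition U (h : R -> R) (n : nat) (sigma : nat -> R) (x : nat -> R * R) : R :=
  sumR n (fun j => sumR j (fun i => sigma i * sigma j * h (dist2 (x i) (x j)))).

Definition spins (n : nat) (sigma : nat -> R) : Prop :=
  forall i, (i < n)%nat -> sigma i = 1 \/ sigma i = -1.

Definition is_inf (S : R -> Prop) (m : R) : Prop :=
  (forall y, S y -> m <= y) /\
  (forall m', (forall y, S y -> m' <= y) -> m' <= m).

Definition energy_set (h : R -> R) (y : R) : Prop :=
  exists n sigma x, (2 <= n)%nat /\ spins n sigma /\ y = U h n sigma x / INR n.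

Definition mod_energy_set (h : R -> R) (y : R) : Prop :=
  exists n sigma x, (2 <= n)%nat /\ spins n sigma /\ sumR n sigma <> 0 /\
    y = U h n sigma x / (INR n - 1).

(* Main.v *)
Require Import Defs.
From Stdlib Require Import Reals Lra Lia ZArith.
From Coquelicot Require Import Coquelicot.
Open Scope R_scope.

Lemma sumR_ext n f g : (forall i, (i < n)%nat -> f i = g i) -> sumR n f = sumR n g.
Proof. induction n; simpl; intros H; [reflexivity|]. rewrite IHn by (intros; apply H; lia). rewrite (H n) by lia. reflexivity. Qed.

Lemma sumR_plus n f g : sumR n (fun i => f i + g i) = sumR n f + sumR n g.
Proof. induction n; simpl; [ring|]. rewrite IHn; ring. Qed.

Lemma sumR_minus n f g : sumR n (fun i => f i - g i) = sumR n f - sumR n g.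
Proof. induction n; simpl; [ring|]. rewrite IHn; ring. Qed.

Lemma sumR_scal n c f : sumR n (fun i => c * f i) = c * sumR n f.
Proof. induction n; simpl; [ring|]. rewrite IHn; ring. Qed.

Lemma sumR_const n c : sumR n (fun _ => c) = INR n * c.
Proof. induction n; simpl sumR; [simpl; ring|]. rewrite IHn, S_INR; ring. Qed.

Lemma sumR_le n f g : (forall i, (i < n)%nat -> f i <= g i) -> sumR n f <= sumR n g.
Proof. induction n; simpl; intros H; [lra|]. specialize (IHn ltac:(intros; apply H; lia)). specialize (H n ltac:(lia)). lra. Qed.

Lemma sumR_nonneg n f : (forall i, (i < n)%nat -> 0 <= f i) -> 0 <= sumR n f.
Proof. intros H. replace 0 with (sumR n (fun _ => 0)). apply sumR_le; auto. rewrite sumR_const; ring. Qed.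

Lemma sumR_term_le n f i : (forall i, (i < n)%nat -> 0 <= f i) -> (i < n)%nat -> f i <= sumR n f.
Proof. induction n; simpl; intros H Hi; [lia|]. destruct (Nat.eq_dec i n) as [->|Hne].
- assert (0 <= sumR n f) by (apply sumR_nonneg; intros; apply H; lia). lra.
- assert (f i <= sumR n f) by (apply IHn; [intros; apply H; lia|lia]). specialize (H n ltac:(lia)). lra. Qed.

Lemma sumR_swap n m (f : nat -> nat -> R) :
  sumR n (fun i => sumR m (fun j => f i j)) = sumR m (fun j => sumR n (fun i => f i j)).
Proof. induction n; simpl. - rewrite sumR_const; simpl; ring. - rewrite IHn, <- sumR_plus. reflexivity. Qed.

Lemma sumR_mult n f g : sumR n f * sumR n g = sumR n (fun i => sumR n (fun j => f i * g j)).
Proof.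
  rewrite Rmult_comm, <- sumR_scal. apply sumR_ext; intros i _.
  rewrite Rmult_comm, <- sumR_scal. apply sumR_ext; intros; ring. Qed.

Lemma sumR_sym n (a : nat -> nat -> R) : (forall i j, a i j = a j i) ->
  sumR n (fun i => sumR n (fun j => a i j)) =
  2 * sumR n (fun j => sumR j (fun i => a i j)) + sumR n (fun i => a i i).
Proof.
  intros Hs. induction n; simpl; [ring|].
  rewrite sumR_plus, IHn.
  assert (E: sumR n (fun j => a n j) = sumR n (fun i => a i n)) by (apply sumR_ext; intros; apply Hs).
  rewrite E. ring. Qed.

Lemma sumR_int n f : (forall i, (i < n)%nat -> exists z, f i = IZR z) -> exists z, sumR n f = IZR z.
Proof. induction n; simpl; intros H. - exists 0%Z; reflexivity.
  - destruct IHn as [z1 Hz1]; [intros; apply H; lia|]. destruct (H n ltac:(lia)) as [z2 Hz2].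
    exists (z1 + z2)%Z. rewrite plus_IZR, Hz1, Hz2; reflexivity. Qed.

Lemma int_sq_ge z : IZR z <= IZR z * IZR z.
Proof. rewrite <- mult_IZR. apply IZR_le. nia. Qed.

Lemma int_abs_ge1 z : IZR z <> 0 -> 1 <= Rabs (IZR z).
Proof. intros H. assert (z <> 0%Z) by (intro; subst; apply H; reflexivity).
  rewrite <- abs_IZR. apply IZR_le. lia. Qed.

Lemma Rabs_le_inv a b : Rabs a <= b -> - b <= a <= b.
Proof. unfold Rabs; destruct Rcase_abs; lra. Qed.
Lemma nat_unbounded x : exists K : nat, x <= INR K.
Proof.
  destruct (archimed x) as [H1 _]. exists (Z.to_nat (up x)).
  destruct (Z_lt_le_dec (up x) 0) as [Hl|Hl].
  - apply IZR_lt in Hl. pose proof (pos_INR (Z.to_nat (up x))). lra.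
  - rewrite INR_IZR_INZ, Z2Nat.id by lia. lra.
Qed.

Definition ind (b : bool) : R := if b then 1 else 0.
Definition ge_ind (a x : R) : R := if Rle_dec a x then 1 else 0.

Definition cup (a : R) (K : nat) := sumR (S K) (fun k => ge_ind a (INR k)).
Definition cgt (b : R) (K : nat) := sumR (S K) (fun k => 1 - ge_ind (INR k) b).

Lemma cup_bounds a K : 0 <= a -> Rmax 0 (INR K - a) <= cup a K <= Rmax 0 (INR K + 1 - a).
Proof.
  intros Ha. unfold cup. induction K.
  - simpl. unfold ge_ind. destruct (Rle_dec a 0); unfold Rmax; repeat destruct Rle_dec; lra.
  - change (sumR (S (S K)) (fun k => ge_ind a (INR k))) with
      (sumR (S K) (fun k => ge_ind a (INR k)) + ge_ind a (INR (S K))).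
    set (c := sumR (S K) _) in *. rewrite S_INR in *. unfold ge_ind. pose proof (pos_INR K).
    destruct (Rle_dec a (INR K + 1)); unfold Rmax in *; repeat destruct Rle_dec; lra.
Qed.

Lemma cgt_bounds b K : 0 <= b -> Rmax 0 (INR K - b) <= cgt b K <= Rmax 0 (INR K + 1 - b).
Proof.
  intros Hb. unfold cgt. induction K.
  - simpl. unfold ge_ind. destruct (Rle_dec 0 b); unfold Rmax; repeat destruct Rle_dec; lra.
  - change (sumR (S (S K)) (fun k => 1 - ge_ind (INR k) b)) with
      (sumR (S K) (fun k => 1 - ge_ind (INR k) b) + (1 - ge_ind (INR (S K)) b)).
    set (c := sumR (S K) _) in *. rewrite S_INR in *. unfold ge_ind. pose proof (pos_INR K).
    destruct (Rle_dec (INR K + 1) b); unfold Rmax in *; repeat destruct Rle_dec; lra.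
Qed.

Definition chi2 (a b x : R) : R := ge_ind a x * ge_ind x b.

Lemma count_bound a b K : 0 <= a -> b <= INR K ->
  Rabs (sumR (S K) (fun k => chi2 a b (INR k)) - Rmax 0 (b - a)) <= 1.
Proof.
  intros Ha Hb. destruct (Rle_dec a b) as [Hab|Hab].
  - assert (E: sumR (S K) (fun k => chi2 a b (INR k)) = cup a K - cgt b K).
    { unfold cup, cgt. rewrite <- sumR_minus. apply sumR_ext; intros k _.
      unfold chi2, ge_ind. repeat destruct Rle_dec; lra. }
    rewrite E. pose proof (cup_bounds a K Ha). pose proof (cgt_bounds b K ltac:(lra)).
    unfold Rmax in *; repeat destruct Rle_dec; apply Rabs_le; lra.
  - rewrite (sumR_ext _ _ (fun _ => 0)). rewrite sumR_const.
    unfold Rmax; destruct Rle_dec; apply Rabs_le; lra.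
    intros k _; unfold chi2, ge_ind; repeat destruct Rle_dec; lra.
Qed.

Definition ovl (c1 r1 c2 r2 : R) : R :=
  Rmax 0 (Rmin (c1 + r1) (c2 + r2) - Rmax (c1 - r1) (c2 - r2)).

Lemma ovl_self c r : 0 <= r -> ovl c r c r = 2 * r.
Proof. intros; unfold ovl, Rmin, Rmax; repeat destruct Rle_dec; lra. Qed.

Section Lattice.
Variables (B NN : R) (K : nat).
Definition zz (k : nat) := INR k / NN - B.
Definition chiL (lo hi : R) (k : nat) := chi2 lo hi (zz k).
Definition cnt (lo hi : R) := sumR (S K) (chiL lo hi).

Lemma chiL_scale lo hi k : 0 < NN -> chiL lo hi k = chi2 (NN * (lo + B)) (NN * (hi + B)) (INR k).
Proof.
  intros HN. unfold chiL, chi2, ge_ind, zz.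
  assert (A1: lo <= INR k / NN - B <-> NN * (lo + B) <= INR k).
  { split; intro h.
    - apply (Rmult_le_compat_l NN) in h; [|lra].
      replace (NN * (INR k / NN - B)) with (INR k - NN*B) in h by (field; lra). lra.
    - apply (Rmult_le_reg_l NN); [lra|].
      replace (NN * (INR k / NN - B)) with (INR k - NN*B) by (field; lra). lra. }
  assert (A2: INR k / NN - B <= hi <-> INR k <= NN * (hi + B)).
  { split; intro h.
    - apply (Rmult_le_compat_l NN) in h; [|lra].
      replace (NN * (INR k / NN - B)) with (INR k - NN*B) in h by (field; lra). lra.
    - apply (Rmult_le_reg_l NN); [lra|].
      replace (NN * (INR k / NN - B)) with (INR k - NN*B) by (field; lra). lra. }
  destruct (Rle_dec lo (INR k / NN - B)); destruct (Rle_dec (NN * (lo + B)) (INR k));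
  destruct (Rle_dec (INR k / NN - B) hi); destruct (Rle_dec (INR k) (NN * (hi + B)));
  try reflexivity; exfalso; tauto.
Qed.

Lemma cnt_bound lo hi : 0 < NN -> -B <= lo -> hi <= B -> 2 * B * NN <= INR K ->
  Rabs (cnt lo hi - NN * Rmax 0 (hi - lo)) <= 1.
Proof.
  intros HN Hlo Hhi HK. unfold cnt.
  rewrite (sumR_ext _ _ (fun k => chi2 (NN * (lo + B)) (NN * (hi + B)) (INR k))) by (intros; apply chiL_scale; auto).
  replace (NN * Rmax 0 (hi - lo)) with (Rmax 0 (NN * (hi + B) - NN * (lo + B))).
  apply count_bound. apply Rmult_le_pos; lra. nra.
  unfold Rmax; repeat destruct Rle_dec; nra.
Qed.
End Lattice.
Lemma chi2_mult a b a' b' x : chi2 a b x * chi2 a' b' x = chi2 (Rmax a a') (Rmin b b') x.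
Proof. unfold chi2, ge_ind, Rmax, Rmin; repeat destruct Rle_dec; try lra. Qed.

Lemma chi2_01 a b x : chi2 a b x = 0 \/ chi2 a b x = 1.
Proof. unfold chi2, ge_ind; repeat destruct Rle_dec; lra. Qed.

Lemma sig_pm_bound s v w : (s = 1 \/ s = -1) -> Rabs (v - w) <= 1 -> s * v <= s * w + 1.
Proof. intros [-> | ->] H; apply Rabs_le_inv in H; lra. Qed.

Lemma one_d n (sg c r : nat -> R) : spins n sg -> (forall i, (i < n)%nat -> 0 <= r i) ->
  sumR n (fun i => sg i * (2 * r i)) <=
  sumR n (fun i => sumR n (fun j => sg i * sg j * ovl (c i) (r i) (c j) (r j))).
Proof.
  intros Hs Hr.
  set (LHS := sumR n (fun i => sg i * (2 * r i))).
  set (RHS := sumR n (fun i => sumR n (fun j => sg i * sg j * ovl (c i) (r i) (c j) (r j)))).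
  set (B := 1 + sumR n (fun i => Rabs (c i) + r i)).
  assert (HB : forall i, (i < n)%nat -> -B <= c i - r i /\ c i + r i <= B).
  { intros i Hi. assert (Rabs (c i) + r i <= sumR n (fun i => Rabs (c i) + r i)).
    { apply (sumR_term_le n (fun i => Rabs (c i) + r i)); auto.
      intros; pose proof (Rabs_pos (c i0)); pose proof (Hr i0 H); lra. }
    pose proof (Rabs_le_inv (c i) (Rabs (c i)) (Rle_refl _)). unfold B; lra. }
  assert (Hsig2 : forall i j, (i < n)%nat -> (j < n)%nat -> sg i * sg j = 1 \/ sg i * sg j = -1).
  { intros i j Hi Hj; destruct (Hs i Hi) as [-> | ->]; destruct (Hs j Hj) as [-> | ->]; lra. }
  destruct (Rle_lt_dec LHS RHS) as [Hle|Hlt]; [exact Hle|exfalso].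
  set (X := RHS - LHS).
  destruct (nat_unbounded ((INR n + INR n * INR n) / (- X))) as [N0 HN0].
  set (NN := INR N0 + 1).
  assert (HNN : 0 < NN) by (pose proof (pos_INR N0); unfold NN; lra).
  destruct (nat_unbounded (2 * B * NN)) as [K HK].
  set (lo := fun i => c i - r i). set (hi := fun i => c i + r i).
  set (cn := cnt B NN K).
  assert (Hlat : sumR n (fun i => sg i * cn (lo i) (hi i)) <=
                 sumR n (fun i => sumR n (fun j => sg i * sg j * cn (Rmax (lo i) (lo j)) (Rmin (hi i) (hi j))))).
  { set (F := fun k => sumR n (fun i => sg i * chiL B NN (lo i) (hi i) k)).
    assert (E1 : sumR n (fun i => sg i * cn (lo i) (hi i)) = sumR (S K) F).
    { unfold F, cn, cnt. rewrite sumR_swap. apply sumR_ext; intros i _. rewrite sumR_scal. reflexivity. }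
    assert (E2 : sumR n (fun i => sumR n (fun j => sg i * sg j * cn (Rmax (lo i) (lo j)) (Rmin (hi i) (hi j))))
                 = sumR (S K) (fun k => F k * F k)).
    { unfold F. rewrite (sumR_ext (S K) _ (fun k => sumR n (fun i => sumR n (fun j =>
          sg i * chiL B NN (lo i) (hi i) k * (sg j * chiL B NN (lo j) (hi j) k)))))
        by (intros; apply sumR_mult).
      rewrite (sumR_swap (S K) n). apply sumR_ext; intros i _. rewrite (sumR_swap (S K) n). apply sumR_ext; intros j _.
      unfold cn, cnt. rewrite <- sumR_scal. apply sumR_ext; intros k _.
      unfold chiL. rewrite <- chi2_mult. ring. }
    rewrite E1, E2. apply sumR_le. intros k _.
    assert (Hz : exists z, F k = IZR z).
    { unfold F. apply sumR_int. intros i Hi.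
      destruct (Hs i Hi) as [-> | ->]; destruct (chi2_01 (lo i) (hi i) (zz B NN k)) as [h|h];
        unfold chiL; rewrite h; [exists 0%Z|exists 1%Z|exists 0%Z|exists (-1)%Z]; simpl; lra. }
    destruct Hz as [z ->]. apply int_sq_ge. }
  assert (Hup : sumR n (fun i => sumR n (fun j => sg i * sg j * cn (Rmax (lo i) (lo j)) (Rmin (hi i) (hi j))))
               <= NN * RHS + INR n * INR n).
  { unfold RHS. rewrite <- sumR_scal.
    replace (INR n * INR n) with (sumR n (fun _ => sumR n (fun _ => 1))) by (rewrite !sumR_const; ring).
    rewrite <- sumR_plus. apply sumR_le; intros i Hi. rewrite <- sumR_scal, <- sumR_plus.
    apply sumR_le; intros j Hj.
    replace (NN * (sg i * sg j * ovl (c i) (r i) (c j) (r j))) with (sg i * sg j * (NN * ovl (c i) (r i) (c j) (r j))) by ring.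
    apply sig_pm_bound; [auto|]. unfold cn. apply cnt_bound; auto.
    - destruct (HB i Hi), (HB j Hj). unfold lo, Rmax; destruct Rle_dec; lra.
    - destruct (HB i Hi), (HB j Hj). unfold hi, Rmin; destruct Rle_dec; lra. }
  assert (Hlow : NN * LHS - INR n <= sumR n (fun i => sg i * cn (lo i) (hi i))).
  { unfold LHS. rewrite <- sumR_scal. replace (INR n) with (sumR n (fun _ => 1)) by (rewrite sumR_const; ring).
    rewrite <- sumR_minus. apply sumR_le; intros i Hi.
    assert (H1 : (-1) * (sg i) = 1 \/ (-1) * sg i = -1) by (destruct (Hs i Hi) as [-> | ->]; lra).
    assert (H2 := sig_pm_bound ((-1) * sg i) (cn (lo i) (hi i)) (NN * (2 * r i)) H1).
    assert (H3 : Rabs (cn (lo i) (hi i) - NN * (2 * r i)) <= 1).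
    { replace (2 * r i) with (Rmax 0 (hi i - lo i)).
      - unfold cn; apply cnt_bound; auto; destruct (HB i Hi); unfold lo, hi; lra.
      - unfold hi, lo, Rmax; destruct Rle_dec; pose proof (Hr i Hi); lra. }
    specialize (H2 H3). lra. }
  assert (HX : NN * X >= - (INR n + INR n * INR n)) by (unfold X; lra).
  assert (HXn : 0 < - X) by (unfold X; lra).
  assert (NN * (-X) > INR n + INR n * INR n).
  { apply (Rmult_le_compat_r (-X)) in HN0; [|lra].
    replace ((INR n + INR n * INR n) / - X * - X) with (INR n + INR n * INR n) in HN0 by (field; lra).
    unfold NN. nra. }
  lra.
Qed.
Definition sq (t : R) : R := sqrt (/4 - t * t).
Definition core (r1 r2 q : R) : R := Rmax 0 (r1 + r2 - Rmax (Rabs (r1 - r2)) (Rabs q)).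
Definition Lf (p q t : R) : R := core (sq t) (sq (t - p)) q.

Lemma sq_pos t : 0 <= sq t.
Proof. apply sqrt_pos. Qed.

Lemma sq_zero t : /4 - t * t <= 0 -> sq t = 0.
Proof. intros; unfold sq; apply sqrt_neg_0; auto. Qed.

Lemma sq_sq t : 0 <= /4 - t * t -> sq t * sq t = /4 - t * t.
Proof. intros; unfold sq; apply sqrt_sqrt; auto. Qed.

Lemma sq_pos_arg t : 0 < sq t -> 0 < /4 - t * t.
Proof. intros H. destruct (Rle_lt_dec (/4 - t*t) 0) as [h|h]; auto. rewrite sq_zero in H; lra. Qed.

Lemma ovl_core c1 r1 c2 r2 : 0 <= r1 -> 0 <= r2 -> ovl c1 r1 c2 r2 = core r1 r2 (c2 - c1).
Proof. intros. unfold ovl, core, Rmin, Rmax, Rabs. repeat (destruct Rle_dec || destruct Rcase_abs); lra. Qed.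

Lemma core_lip r1 r2 q1 q2 : Rabs (core r1 r2 q1 - core r1 r2 q2) <= Rabs (q1 - q2).
Proof. unfold core, Rmax, Rabs. repeat (destruct Rle_dec || destruct Rcase_abs); lra. Qed.

Lemma core_abs r1 r2 q : core r1 r2 (Rabs q) = core r1 r2 q.
Proof. unfold core. rewrite Rabs_Rabsolu. reflexivity. Qed.

Lemma core_nonneg r1 r2 q : 0 <= core r1 r2 q.
Proof. unfold core, Rmax; destruct Rle_dec; lra. Qed.

Lemma core_pos r1 r2 q : 0 <= r1 -> 0 <= r2 -> 0 < q -> 0 < core r1 r2 q ->
  q < r1 + r2.
Proof. intros. unfold core, Rmax, Rabs in *. repeat (destruct Rle_dec || destruct Rcase_abs); lra. Qed.

Lemma core_pos' r1 r2 q : 0 <= r1 -> 0 <= r2 -> 0 < core r1 r2 q -> 0 < r1 /\ 0 < r2.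
Proof. intros. unfold core, Rmax, Rabs in *. repeat (destruct Rle_dec || destruct Rcase_abs); lra. Qed.

Lemma core_diff_pos r1 r2 q1 q2 : 0 <= r1 -> 0 <= r2 -> 0 <= q1 -> q1 <= q2 ->
  0 < core r1 r2 q1 - core r1 r2 q2 ->
  exists q', q1 < q' < q2 /\ Rabs (r1 - r2) < q' < r1 + r2.
Proof.
  intros H1 H2 H3 H4 H. exists ((Rmax (Rabs (r1 - r2)) q1 + Rmin (r1 + r2) q2) / 2).
  unfold core, Rmax, Rmin, Rabs in *. repeat (destruct Rle_dec || destruct Rcase_abs); lra.
Qed.

Lemma core_diff_eq r1 r2 q1 q2 : 0 <= q1 -> q1 <= q2 ->
  Rabs (r1 - r2) < q1 < r1 + r2 -> Rabs (r1 - r2) < q2 < r1 + r2 ->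
  core r1 r2 q1 - core r1 r2 q2 = q2 - q1.
Proof. intros. unfold core, Rmax, Rabs in *. repeat (destruct Rle_dec || destruct Rcase_abs); lra. Qed.

Lemma core_diff_bounds r1 r2 q1 q2 : 0 <= q1 -> q1 <= q2 ->
  0 <= core r1 r2 q1 - core r1 r2 q2 <= q2 - q1.
Proof. intros. unfold core, Rmax, Rabs in *. repeat (destruct Rle_dec || destruct Rcase_abs); lra. Qed.

Lemma KA_ident p q t : 4 * (p*p + q*q) * ((t - p/2) * (t - p/2)) - q*q * (1 - (p*p + q*q)) =
  (q*q - (/4 - t*t) - (/4 - (t-p)*(t-p)))^2 - 4 * (/4 - t*t) * (/4 - (t-p)*(t-p)).
Proof. field. Qed.

Lemma KA1 p q t : 0 < q -> Rabs (sq t - sq (t - p)) < q -> q < sq t + sq (t - p) ->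
  4 * (p*p + q*q) * ((t - p/2) * (t - p/2)) < q*q * (1 - (p*p + q*q)).
Proof.
  intros Hq H1 H2. pose proof (sq_pos t) as P1. pose proof (sq_pos (t - p)) as P2.
  assert (S1 : 0 < sq t).
  { destruct (Rle_lt_dec (sq t) 0); auto. assert (sq t = 0) by lra. rewrite H in H1, H2.
    rewrite Rabs_minus_sym, Rminus_0_r, Rabs_right in H1 by lra. lra. }
  assert (S2 : 0 < sq (t - p)).
  { destruct (Rle_lt_dec (sq (t-p)) 0); auto. assert (sq (t-p) = 0) by lra. rewrite H in H1, H2.
    rewrite Rminus_0_r, Rabs_right in H1 by lra. lra. }
  pose proof (sq_sq t (Rlt_le _ _ (sq_pos_arg t S1))) as E1.
  pose proof (sq_sq (t-p) (Rlt_le _ _ (sq_pos_arg (t-p) S2))) as E2.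
  apply Rabs_def2 in H1. destruct H1 as [H1a H1b].
  set (s1 := sq t) in *. set (s2 := sq (t - p)) in *.
  assert (X1 : 2 * s1 * s2 - (q*q - s1*s1 - s2*s2) > 0) by nra.
  assert (X2 : 2 * s1 * s2 + (q*q - s1*s1 - s2*s2) > 0) by nra.
  apply (Rplus_lt_reg_r (- (q * q * (1 - (p * p + q * q))))).
  replace (4 * (p * p + q * q) * ((t - p / 2) * (t - p / 2)) + - (q * q * (1 - (p * p + q * q))))
    with (4 * (p*p + q*q) * ((t - p/2) * (t - p/2)) - q*q * (1 - (p*p + q*q))) by ring.
  rewrite KA_ident, <- E1, <- E2. nra.
Qed.

Lemma sq_lt_bound a b : a * a < b * b -> 0 < b -> - b < a < b.
Proof.
  intros H Hb. split.
  - destruct (Rlt_le_dec (-b) a); auto. assert (b * b <= a * a) by nra. lra.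
  - destruct (Rlt_le_dec a b); auto. assert (b * b <= a * a) by nra. lra.
Qed.

Lemma KA2 p q t : 0 < q ->
  4 * (p*p + q*q) * ((t - p/2) * (t - p/2)) < q*q * (1 - (p*p + q*q)) ->
  Rabs (sq t - sq (t - p)) < q /\ q < sq t + sq (t - p).
Proof.
  intros Hq H. pose proof (KA_ident p q t) as E.
  set (a := /4 - t*t) in *. set (b := /4 - (t-p)*(t-p)) in *.
  assert (Hf : (q*q - a - b)^2 < 4 * a * b) by lra.
  assert (Hab : 0 < a /\ 0 < b).
  { pose proof (pow2_ge_0 (q*q - a - b)). assert (0 < a * b) by nra.
    destruct (Rlt_le_dec 0 a); destruct (Rlt_le_dec 0 b); try (split; auto; fail); try nra.
    exfalso. assert (0 <= q*q) by nra.
    assert (E3 : (q*q - a - b)^2 - (a + b)^2 = (q*q)*(q*q - 2*a - 2*b)) by ring.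
    assert (0 <= (q*q)*(q*q - 2*a - 2*b)) by (apply Rmult_le_pos; lra).
    pose proof (pow2_ge_0 (a - b)). nra. }
  destruct Hab as [Ha Hb].
  pose proof (sq_sq t (Rlt_le _ _ Ha)) as E1. pose proof (sq_sq (t-p) (Rlt_le _ _ Hb)) as E2.
  pose proof (sq_pos t) as P1. pose proof (sq_pos (t - p)) as P2.
  fold a in E1. fold b in E2.
  set (s1 := sq t) in *. set (s2 := sq (t - p)) in *.
  assert (S1 : 0 < s1) by (destruct (Rle_lt_dec s1 0); nra).
  assert (S2 : 0 < s2) by (destruct (Rle_lt_dec s2 0); nra).
  rewrite <- E1, <- E2 in Hf.
  assert (Y : (q*q - s1*s1 - s2*s2) * (q*q - s1*s1 - s2*s2) < (2*s1*s2) * (2*s1*s2)) by nra.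
  assert (S12 : 0 < 2 * s1 * s2) by nra.
  destruct (sq_lt_bound _ _ Y S12) as [Ya Yb].
  assert (Y1 : q*q < (s1 + s2) * (s1 + s2)) by nra.
  assert (Y2 : (s1 - s2) * (s1 - s2) < q * q) by nra.
  split.
  - unfold Rabs; destruct Rcase_abs; nra.
  - nra.
Qed.
Lemma Rmax_abs a b : Rmax a b = (a + b + Rabs (a - b)) / 2.
Proof. unfold Rmax, Rabs; destruct Rle_dec, Rcase_abs; lra. Qed.

Lemma cont_Rmax (f g : R -> R) x : continuous f x -> continuous g x -> continuous (fun t => Rmax (f t) (g t)) x.
Proof.
  intros Hf Hg. apply (continuous_ext (fun t => (f t + g t + Rabs (f t - g t)) * / 2)).
  { intros; rewrite Rmax_abs; reflexivity. }
  apply (continuous_mult (fun t => f t + g t + Rabs (f t - g t)) (fun _ => /2)); [|apply continuous_const].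
  apply (continuous_plus (fun t => f t + g t) (fun t => Rabs (f t - g t))).
  - apply (continuous_plus f g); auto.
  - apply continuous_Rabs_comp. apply (continuous_minus f g); auto.
Qed.

Lemma cont_sq (f : R -> R) x : continuous f x -> continuous (fun t => sq (f t)) x.
Proof.
  intros Hf. unfold sq. apply continuous_sqrt_comp.
  apply (continuous_minus (fun _ => /4) (fun t => f t * f t)); [apply continuous_const|].
  apply (continuous_mult f f); auto.
Qed.

Lemma cont_Lf p q t : continuous (Lf p q) t.
Proof.
  unfold Lf, core.
  apply (cont_Rmax (fun _ => 0)); [apply continuous_const|].
  apply (continuous_minus (fun t => sq t + sq (t - p))).
  - apply (continuous_plus (fun t => sq t) (fun t => sq (t - p))).
    + apply cont_sq, continuous_id.
    + apply cont_sq. apply (continuous_minus (fun t => t) (fun _ => p)); [apply continuous_id|apply continuous_const].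
  - apply (cont_Rmax (fun t => Rabs (sq t - sq (t - p))) (fun _ => Rabs q)); [|apply continuous_const].
    apply continuous_Rabs_comp. apply (continuous_minus (fun t => sq t) (fun t => sq (t - p))).
    + apply cont_sq, continuous_id.
    + apply cont_sq. apply (continuous_minus (fun t => t) (fun _ => p)); [apply continuous_id|apply continuous_const].
Qed.

Lemma ex_Lf p q a b : ex_RInt (Lf p q) a b.
Proof. apply (@ex_RInt_continuous R_CompleteNormedModule); intros; apply cont_Lf. Qed.

Lemma RInt_zero_on (f : R -> R) a b : (forall x, Rmin a b < x < Rmax a b -> f x = 0) -> RInt f a b = 0.
Proof.
  intros H. rewrite (RInt_ext f (fun _ => 0)) by auto. rewrite RInt_const. unfold scal; simpl; unfold mult; simpl. ring.
Qed.

Lemma RInt_split3 (f : R -> R) a b c d : a <= b -> b <= c -> c <= d -> ex_RInt f a d ->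
  RInt f a d = RInt f a b + RInt f b c + RInt f c d.
Proof.
  intros H1 H2 H3 Hex.
  assert (Ebd : ex_RInt f b d) by (apply (ex_RInt_Chasles_2 f a b d); auto; lra).
  assert (Eab : ex_RInt f a b) by (apply (ex_RInt_Chasles_1 f a b d); auto; lra).
  assert (Ebc : ex_RInt f b c) by (apply (ex_RInt_Chasles_1 f b c d); auto; lra).
  assert (Ecd : ex_RInt f c d) by (apply (ex_RInt_Chasles_2 f b c d); auto; lra).
  rewrite <- (RInt_Chasles f a b d Eab Ebd), <- (RInt_Chasles f b c d Ebc Ecd).
  unfold plus; simpl. ring.
Qed.

Lemma int_ub (f : R -> R) m r c : ex_RInt f (-2) 2 -> -2 <= m - r -> m + r <= 2 -> 0 <= r ->
  (forall t, -2 <= t <= 2 -> f t <= c) ->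
  (forall t, -2 <= t <= 2 -> r <= Rabs (t - m) -> f t = 0) ->
  RInt f (-2) 2 <= 2 * r * c.
Proof.
  intros Hex H1 H2 Hr Hc H0.
  rewrite (RInt_split3 f (-2) (m - r) (m + r) 2) by (auto; lra).
  rewrite (RInt_zero_on f (-2) (m - r)), (RInt_zero_on f (m + r) 2).
  - assert (RInt f (m - r) (m + r) <= RInt (fun _ => c) (m - r) (m + r)).
    { apply RInt_le; [lra| |apply ex_RInt_const|].
      + apply (ex_RInt_Chasles_1 f (m-r) (m+r) 2); [lra|]. apply (ex_RInt_Chasles_2 f (-2) (m-r) 2); auto; lra.
      + intros; apply Hc; lra. }
    rewrite RInt_const in H. unfold scal in H; simpl in H; unfold mult in H; simpl in H. lra.
  - intros x Hx. rewrite Rmin_left, Rmax_right in Hx by lra. apply H0; [lra|].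
    unfold Rabs; destruct Rcase_abs; lra.
  - intros x Hx. rewrite Rmin_left, Rmax_right in Hx by lra. apply H0; [lra|].
    unfold Rabs; destruct Rcase_abs; lra.
Qed.

Lemma int_lb (f : R -> R) m r c : ex_RInt f (-2) 2 -> -2 <= m - r -> m + r <= 2 -> 0 <= r ->
  (forall t, -2 <= t <= 2 -> 0 <= f t) ->
  (forall t, Rabs (t - m) < r -> f t = c) ->
  2 * r * c <= RInt f (-2) 2.
Proof.
  intros Hex H1 H2 Hr Hc Hm.
  assert (E1 : ex_RInt f (m - r) 2) by (apply (ex_RInt_Chasles_2 f (-2) (m-r) 2); auto; lra).
  rewrite (RInt_split3 f (-2) (m - r) (m + r) 2) by (auto; lra).
  assert (A1 : 0 <= RInt f (-2) (m - r)).
  { replace 0 with (RInt (fun _ => 0) (-2) (m - r)).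
    2:{ rewrite RInt_const. unfold scal; simpl; unfold mult; simpl; ring. }
    apply RInt_le; [lra|apply ex_RInt_const| |].
    + apply (ex_RInt_Chasles_1 f (-2) (m-r) 2); auto; lra.
    + intros; apply Hc; lra. }
  assert (A3 : 0 <= RInt f (m + r) 2).
  { replace 0 with (RInt (fun _ => 0) (m + r) 2).
    2:{ rewrite RInt_const. unfold scal; simpl; unfold mult; simpl; ring. }
    apply RInt_le; [lra|apply ex_RInt_const| |].
    + apply (ex_RInt_Chasles_2 f (m-r) (m+r) 2); auto; lra.
    + intros; apply Hc; lra. }
  rewrite (RInt_ext f (fun _ => c) (m - r) (m + r)).
  - rewrite RInt_const. unfold scal; simpl; unfold mult; simpl. lra.
  - intros x Hx. rewrite Rmin_left, Rmax_right in Hx by lra. apply Hm.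
    unfold Rabs; destruct Rcase_abs; lra.
Qed.
Definition rho (p q : R) : R := q * sqrt (1 - (p*p + q*q)) / (2 * sqrt (p*p + q*q)).
Definition Gam (p q : R) : R :=
  (acos (sqrt (p*p + q*q)) - sqrt (p*p + q*q) * sqrt (1 - (p*p + q*q))) / 2.

Lemma acos_is_derive x : -1 < x < 1 -> is_derive acos x (-1 / sqrt (1 - x * x)).
Proof.
  intros Hx. apply is_derive_Reals. apply (derive_pt_eq_1 _ _ _ (derivable_pt_acos x Hx)).
  rewrite derive_pt_acos. reflexivity.
Qed.

Lemma Gam_deriv p q : 0 < q -> p*p + q*q < 1 -> is_derive (Gam p) q (-2 * rho p q).
Proof.
  intros Hq Hd.
  assert (Hd0 : 0 < p*p + q*q) by nra.
  set (d := sqrt (p*p + q*q)). set (w := sqrt (1 - (p*p + q*q))).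
  assert (Hdp : 0 < d) by (apply sqrt_lt_R0; lra).
  assert (Hwp : 0 < w) by (apply sqrt_lt_R0; lra).
  assert (Ed : d * d = p*p + q*q) by (apply sqrt_sqrt; lra).
  assert (Ew : w * w = 1 - (p*p + q*q)) by (apply sqrt_sqrt; lra).
  assert (Hd1 : d < 1) by nra.
  assert (HD : is_derive (fun q => sqrt (p*p + q*q)) q (q / d)).
  { auto_derive. lra. fold d. field. lra. }
  assert (HW : is_derive (fun q => sqrt (1 - (p*p + q*q))) q (- q / w)).
  { auto_derive. lra. replace (1 + - (p*p+q*q)) with (1 - (p*p+q*q)) by ring. fold w. field. lra. }
  assert (HA : is_derive (fun q => acos (sqrt (p*p + q*q))) q (q / d * (-1 / w))).
  { assert (E : sqrt (1 - d * d) = w) by (rewrite Ed; reflexivity).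
    pose proof (is_derive_comp acos (fun q => sqrt (p*p + q*q)) q (-1 / sqrt (1 - d * d)) (q / d)) as H.
    rewrite E in H. apply H; [|exact HD]. fold d. rewrite <- E. apply acos_is_derive. lra. }
  assert (HP : is_derive (fun q => sqrt (p*p + q*q) * sqrt (1 - (p*p + q*q))) q (q / d * w + d * (- q / w))).
  { apply (is_derive_mult (fun q => sqrt (p*p + q*q)) (fun q => sqrt (1 - (p*p + q*q)))); auto.
    intros; unfold mult; simpl; ring. }
  pose proof (is_derive_minus _ _ _ _ _ HA HP) as HM.
  pose proof (is_derive_scal _ _ (/2) _ HM) as HS.
  unfold Gam. eapply is_derive_ext.
  2: { replace (-2 * rho p q) with (/ 2 * minus (q / d * (-1 / w)) (q / d * w + d * (- q / w))).
       exact HS.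
       unfold rho, minus, plus, opp; simpl. fold d w.
       assert (K : d * d + w * w = 1) by lra.
       apply Rminus_diag_uniq.
       match goal with |- ?A - ?B = 0 => replace (A - B) with (q * (d*d + w*w - 1) / (2*d*w)) by (field; lra) end.
       rewrite K. field. lra. }
  intros t. unfold minus, plus, opp; simpl. lra.
Qed.
Definition G (p q : R) : R := RInt (Lf p q) (-2) 2.

Section RhoFacts.
Variables p q : R.
Hypothesis Hq : 0 < q.
Hypothesis Hd : p*p + q*q < 1.

Lemma rho_facts : 0 <= rho p q /\ rho p q <= /2.
Proof.
  unfold rho. assert (Hd0 : 0 < p*p + q*q) by nra.
  set (d := sqrt (p*p + q*q)). set (w := sqrt (1 - (p*p + q*q))).
  assert (Hdp : 0 < d) by (apply sqrt_lt_R0; lra).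
  assert (Hwp : 0 < w) by (apply sqrt_lt_R0; lra).
  assert (Ed : d * d = p*p + q*q) by (apply sqrt_sqrt; lra).
  assert (Ew : w * w = 1 - (p*p + q*q)) by (apply sqrt_sqrt; lra).
  assert (Hqd : q <= d) by nra. assert (Hw1 : w <= 1) by nra.
  split.
  - apply Rmult_le_pos; [nra|]. apply Rlt_le, Rinv_0_lt_compat; lra.
  - apply (Rmult_le_reg_r (2 * d)); [lra|]. unfold Rdiv. rewrite Rmult_assoc, Rinv_l by lra. nra.
Qed.

Lemma in_J t : Rabs (t - p/2) < rho p q <->
  4 * (p*p + q*q) * ((t - p/2) * (t - p/2)) < q*q * (1 - (p*p + q*q)).
Proof.
  assert (Hd0 : 0 < p*p + q*q) by nra.
  destruct rho_facts as [R0 _].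
  assert (Er : rho p q * rho p q * (4 * (p*p + q*q)) = q*q * (1 - (p*p + q*q))).
  { unfold rho. set (d := sqrt (p*p + q*q)). set (w := sqrt (1 - (p*p + q*q))).
    assert (Hdp : 0 < d) by (apply sqrt_lt_R0; lra).
    assert (Ed : d * d = p*p + q*q) by (apply sqrt_sqrt; lra).
    assert (Ew : w * w = 1 - (p*p + q*q)) by (apply sqrt_sqrt; lra).
    rewrite <- Ew, <- Ed. field. lra. }
  set (x := t - p/2). rewrite <- Er.
  split; intro H.
  - assert (x * x < rho p q * rho p q).
    { unfold Rabs in H; destruct Rcase_abs; nra. }
    nra.
  - assert (x * x < rho p q * rho p q) by nra.
    destruct (sq_lt_bound x (rho p q)) as [A B]; auto.
    { destruct (Rle_lt_dec (rho p q) 0); [|auto]. nra. }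
    unfold Rabs; destruct Rcase_abs; lra.
Qed.
End RhoFacts.

Lemma core_zero_r r1 q : 0 <= r1 -> core r1 0 q = 0.
Proof. intros; unfold core, Rmax, Rabs; repeat (destruct Rle_dec || destruct Rcase_abs); lra. Qed.
Lemma core_zero_l r2 q : 0 <= r2 -> core 0 r2 q = 0.
Proof. intros; unfold core, Rmax, Rabs; repeat (destruct Rle_dec || destruct Rcase_abs); lra. Qed.

Lemma Lf_far p q t : /4 <= t * t -> Lf p q t = 0.
Proof. intros. unfold Lf. rewrite sq_zero by lra. apply core_zero_l, sq_pos. Qed.

Lemma Lf_dfar p q t : 1 <= p*p + q*q -> Lf p q t = 0.
Proof.
  intros Hd. pose proof (core_nonneg (sq t) (sq (t - p)) q) as H0.
  destruct (Rle_lt_dec (Lf p q t) 0) as [h|h]; [unfold Lf in *; lra|exfalso].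
  unfold Lf in h.
  destruct (core_pos' _ _ _ (sq_pos t) (sq_pos (t-p)) h) as [S1 S2].
  pose proof (sq_sq t (Rlt_le _ _ (sq_pos_arg t S1))) as E1.
  pose proof (sq_sq (t-p) (Rlt_le _ _ (sq_pos_arg (t-p) S2))) as E2.
  set (s1 := sq t) in *. set (s2 := sq (t - p)) in *.
  assert (Hov : Rmax (- s1) (q - s2) < Rmin s1 (q + s2)).
  { unfold core, Rmax, Rmin, Rabs in *. repeat (destruct Rle_dec || destruct Rcase_abs); lra. }
  set (y := (Rmax (- s1) (q - s2) + Rmin s1 (q + s2)) / 2).
  assert (Y1 : - s1 < y < s1) by (unfold y, Rmax, Rmin in *; repeat destruct Rle_dec; lra).
  assert (Y2 : q - s2 < y < q + s2) by (unfold y, Rmax, Rmin in *; repeat destruct Rle_dec; lra).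
  assert (y * y < s1 * s1) by nra.
  assert ((y - q) * (y - q) < s2 * s2) by nra.
  assert (p*p + q*q <= 2 * (t*t + y*y) + 2 * ((t-p)*(t-p) + (y-q)*(y-q))).
  { pose proof (pow2_ge_0 (t + (t - p))). pose proof (pow2_ge_0 (y + (y - q))). nra. }
  lra.
Qed.

Lemma G_minus p q1 q2 : G p q1 - G p q2 = RInt (fun t => Lf p q1 t - Lf p q2 t) (-2) 2.
Proof.
  unfold G. pose proof (RInt_minus (Lf p q1) (Lf p q2) (-2) 2 (ex_Lf _ _ _ _) (ex_Lf _ _ _ _)) as H.
  unfold minus, plus, opp in H; simpl in H. unfold Rminus. symmetry. exact H.
Qed.

Lemma ex_Lf_diff p q1 q2 : ex_RInt (fun t => Lf p q1 t - Lf p q2 t) (-2) 2.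
Proof.
  pose proof (ex_RInt_minus (Lf p q1) (Lf p q2) (-2) 2 (ex_Lf _ _ _ _) (ex_Lf _ _ _ _)) as H.
  exact H.
Qed.

Lemma GB p q1 q2 r R : Rabs p < 1 -> 0 < q1 -> q1 < q2 -> p*p + q2*q2 < 1 ->
  0 <= r -> r <= rho p q1 -> r <= rho p q2 -> R <= 3/4 ->
  (forall q', q1 < q' < q2 -> rho p q' <= R) ->
  2 * r * (q2 - q1) <= G p q1 - G p q2 <= 2 * R * (q2 - q1).
Proof.
  intros Hp Hq1 Hq12 Hd Hr0 Hr1 Hr2 HR3 HR.
  assert (Hd1 : p*p + q1*q1 < 1) by nra.
  assert (Hpp : -1 < p < 1) by (unfold Rabs in Hp; destruct Rcase_abs; lra).
  rewrite G_minus.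
  assert (Hb : forall t, 0 <= Lf p q1 t - Lf p q2 t <= q2 - q1).
  { intros t. unfold Lf. apply core_diff_bounds; lra. }
  split.
  - apply (int_lb _ (p/2) r (q2 - q1)); [apply ex_Lf_diff| | | |intros; apply Hb|].
    + destruct (rho_facts p q1); auto; lra.
    + destruct (rho_facts p q1); auto; lra.
    + auto.
    + intros t Ht. unfold Lf. apply core_diff_eq; try lra.
      * apply KA2; [lra|]. apply (in_J p q1); auto; lra.
      * apply KA2; [lra|]. apply (in_J p q2); auto; lra.
  - assert (HR0 : 0 <= R).
    { specialize (HR ((q1 + q2)/2) ltac:(lra)). destruct (rho_facts p ((q1+q2)/2)); try lra; nra. }
    apply (int_ub _ (p/2) R (q2 - q1)); [apply ex_Lf_diff|lra|lra|auto|intros; apply Hb|].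
    intros t _ Ht.
    destruct (Rle_lt_dec (Lf p q1 t - Lf p q2 t) 0) as [h|h]; [pose proof (Hb t); lra|exfalso].
    unfold Lf in h. destruct (core_diff_pos (sq t) (sq (t-p)) q1 q2 (sq_pos t) (sq_pos (t-p)) ltac:(lra) ltac:(lra) h)
      as [q' [Hq' [D1 D2]]].
    assert (q'*q' < q2*q2) by (apply Rmult_le_0_lt_compat; lra). assert (Hd' : p*p + q'*q' < 1) by lra.
    pose proof (KA1 p q' t ltac:(lra) D1 D2) as K.
    apply (in_J p q' ltac:(lra) Hd' t) in K. specialize (HR q' Hq'). lra.
Qed.
Lemma cont_eps (f : R -> R) x : continuous f x ->
  forall e, 0 < e -> exists d, 0 < d /\ forall y, Rabs (y - x) < d -> Rabs (f y - f x) < e.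
Proof.
  intros Hc e He. apply continuity_pt_filterlim in Hc.
  unfold continuity_pt, continue_in, limit1_in, limit_in in Hc. simpl in Hc. unfold R_dist, D_x, no_cond in Hc.
  destruct (Hc e He) as [d [Hd H]]. exists d; split; auto. intros y Hy.
  destruct (Req_dec x y) as [<-|Hne]. rewrite Rminus_diag, Rabs_R0; auto.
  apply H; auto.
Qed.

Lemma rho_cont p q : 0 < q -> p*p + q*q < 1 -> continuous (rho p) q.
Proof.
  intros Hq Hd. apply (@ex_derive_continuous R_AbsRing R_NormedModule). unfold rho. auto_derive.
  repeat split; try nra.
  assert (0 < sqrt (p*p + q*q)) by (apply sqrt_lt_R0; nra). lra.
Qed.

Lemma G_lip p q1 q2 : Rabs (G p q1 - G p q2) <= 4 * Rabs (q1 - q2).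
Proof.
  rewrite G_minus. apply Rabs_le.
  assert (Hb : forall t, - Rabs (q1 - q2) <= Lf p q1 t - Lf p q2 t <= Rabs (q1 - q2)).
  { intros t. unfold Lf. apply Rabs_le_inv, core_lip. }
  split.
  - replace (- (4 * Rabs (q1 - q2))) with (RInt (fun _ => - Rabs (q1 - q2)) (-2) 2).
    + apply RInt_le; [lra|apply ex_RInt_const|apply ex_Lf_diff|intros; apply Hb].
    + rewrite RInt_const. unfold scal; simpl; unfold mult; simpl. ring.
  - replace (4 * Rabs (q1 - q2)) with (RInt (fun _ => Rabs (q1 - q2)) (-2) 2).
    + apply RInt_le; [lra|apply ex_Lf_diff|apply ex_RInt_const|intros; apply Hb].
    + rewrite RInt_const. unfold scal; simpl; unfold mult; simpl. ring.
Qed.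

Lemma G_deriv p q : Rabs p < 1 -> 0 < q -> p*p + q*q < 1 -> derivable_pt_lim (G p) q (-2 * rho p q).
Proof.
  intros Hp Hq Hd eps Heps.
  set (e := Rmin (eps/4) (/4)).
  assert (He : 0 < e) by (unfold e, Rmin; destruct Rle_dec; lra).
  assert (He1 : e <= eps/4) by (unfold e; apply Rmin_l).
  assert (He2 : e <= /4) by (unfold e; apply Rmin_r).
  destruct (cont_eps _ _ (rho_cont p q Hq Hd) e He) as [d1 [Hd1 Hrc]].
  set (qs := sqrt (1 - p*p)).
  assert (Hqs2 : qs * qs = 1 - p*p) by (apply sqrt_sqrt; nra).
  assert (Hqs : q < qs).
  { assert (0 <= qs) by apply sqrt_pos. destruct (Rlt_le_dec q qs); auto. nra. }
  set (dl := Rmin d1 (Rmin q (qs - q))).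
  assert (Hdl1 : dl <= d1) by (unfold dl; apply Rmin_l).
  assert (Hdl2 : dl <= q) by (unfold dl; eapply Rle_trans; [apply Rmin_r|apply Rmin_l]).
  assert (Hdl3 : dl <= qs - q) by (unfold dl; eapply Rle_trans; [apply Rmin_r|apply Rmin_r]).
  assert (Hdl : 0 < dl) by (unfold dl, Rmin; repeat destruct Rle_dec; lra).
  exists (mkposreal dl Hdl). intros h Hh0 Hh. simpl in Hh.
  assert (Hh' : - dl < h < dl) by (apply Rabs_def2 in Hh; lra).
  assert (Hqh : 0 < q + h < qs) by lra.
  assert (Hdh : p*p + (q+h)*(q+h) < 1).
  { assert ((q+h)*(q+h) < qs * qs) by (apply Rmult_le_0_lt_compat; lra). lra. }
  destruct (rho_facts p q Hq Hd) as [R0 R1].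
  destruct (rho_facts p (q+h) ltac:(lra) Hdh) as [R0h R1h].
  assert (Hrh : Rabs (rho p (q+h) - rho p q) < e) by (apply Hrc; replace (q + h - q) with h by ring; lra).
  apply Rabs_def2 in Hrh.
  set (X := G p (q + h) - G p q).
  assert (Hx : - (2 * e * Rabs h) <= X - (-2 * rho p q) * h <= 2 * e * Rabs h).
  { destruct (Rlt_le_dec 0 h) as [hp|hn].
    - assert (hn0 : 0 <= h) by lra.
      rewrite Rabs_right by lra.
      pose proof (GB p q (q+h) (Rmin (rho p q) (rho p (q+h))) (rho p q + e) Hp Hq ltac:(lra) Hdh) as B.
      destruct B as [B1 B2].
      + unfold Rmin; destruct Rle_dec; lra.
      + apply Rmin_l.
      + apply Rmin_r.
      + lra.
      + intros q' Hq'. assert (Rabs (rho p q' - rho p q) < e) by (apply Hrc; apply Rabs_def1; lra).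
        apply Rabs_def2 in H. lra.
      + replace (q + h - q) with h in B1, B2 by ring.
        assert (Rmin (rho p q) (rho p (q+h)) >= rho p q - e) by (unfold Rmin; destruct Rle_dec; lra).
        unfold X. split; nra.
    - assert (hneg : h < 0) by (destruct (Req_dec h 0); [contradiction|lra]).
      rewrite Rabs_left by lra.
      pose proof (GB p (q+h) q (Rmin (rho p (q+h)) (rho p q)) (rho p q + e) Hp ltac:(lra) ltac:(lra) Hd) as B.
      destruct B as [B1 B2].
      + unfold Rmin; destruct Rle_dec; lra.
      + apply Rmin_l.
      + apply Rmin_r.
      + lra.
      + intros q' Hq'. assert (Rabs (rho p q' - rho p q) < e) by (apply Hrc; apply Rabs_def1; lra).
        apply Rabs_def2 in H. lra.
      + replace (q - (q + h)) with (- h) in B1, B2 by ring.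
        assert (Rmin (rho p (q+h)) (rho p q) >= rho p q - e) by (unfold Rmin; destruct Rle_dec; lra).
        unfold X. split; nra. }
  assert (E : X / h - -2 * rho p q = (X - (-2 * rho p q) * h) / h) by (field; auto).
  fold X. rewrite E. unfold Rdiv. rewrite Rabs_mult, Rabs_Rinv by auto.
  assert (Hah : 0 < Rabs h) by (apply Rabs_pos_lt; auto).
  apply (Rmult_lt_reg_r (Rabs h)); auto. rewrite Rmult_assoc, Rinv_l, Rmult_1_r by lra.
  apply Rle_lt_trans with (2 * e * Rabs h). apply Rabs_le; lra. nra.
Qed.
Definition Phi (p q : R) := G p q - Gam p q.

Lemma Phi_deriv p q : Rabs p < 1 -> 0 < q -> p*p + q*q < 1 -> derivable_pt_lim (Phi p) q 0.
Proof.
  intros Hp Hq Hd.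
  replace 0 with (-2 * rho p q - -2 * rho p q) by ring.
  apply (derivable_pt_lim_minus (G p) (Gam p)).
  - apply G_deriv; auto.
  - apply is_derive_Reals, Gam_deriv; auto.
Qed.

Lemma Phi_const p a b : Rabs p < 1 -> 0 < a -> a <= b -> p*p + b*b < 1 -> Phi p b = Phi p a.
Proof.
  intros Hp Ha Hab Hb.
  assert (Hin : forall x, a <= x <= b -> 0 < x /\ p*p + x*x < 1).
  { intros x Hx. split; [lra|]. assert (x*x <= b*b) by (apply Rmult_le_compat; lra). lra. }
  assert (pr : forall x, a < x < b -> derivable_pt (Phi p) x).
  { intros x Hx. destruct (Hin x ltac:(lra)). exists 0. apply Phi_deriv; auto. }
  pose proof (null_derivative_loc (Phi p) a b pr) as H.
  unfold constant_D_eq in H. apply H.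
  - intros x Hx. destruct (Hin x Hx). apply derivable_continuous_pt. exists 0. apply Phi_deriv; auto.
  - intros x P. destruct (Hin x ltac:(lra)). apply derive_pt_eq_0. apply Phi_deriv; auto.
  - lra.
Qed.

Lemma acos_small d e : 0 < e <= 1 -> cos e < d -> d <= 1 -> acos d < e.
Proof.
  intros He Hd Hd1.
  pose proof (acos_bound d) as [A0 A1].
  assert (Hc : 0 <= cos e) by (apply cos_ge_0; pose proof PI2_1; lra).
  assert (Hdd : -1 <= d <= 1) by (split; lra).
  destruct (Rlt_le_dec (acos d) e) as [h|h]; auto. exfalso.
  destruct (Req_dec (acos d) e) as [E|E].
  - rewrite <- E, cos_acos in Hd by exact Hdd; lra.
  - assert (cos (acos d) < cos e).
    { pose proof PI2_1. pose proof PI_RGT_0. apply cos_decreasing_1; lra. }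
    rewrite cos_acos in H by exact Hdd; lra.
Qed.

Lemma Gam_lim p e : 0 < e -> exists dl, 0 < dl /\ forall b, 1 - dl < p*p + b*b < 1 -> Rabs (Gam p b) < e.
Proof.
  intros He. set (e' := Rmin e 1).
  assert (He' : 0 < e' <= 1) by (unfold e', Rmin; destruct Rle_dec; lra).
  assert (He'e : e' <= e) by (unfold e'; apply Rmin_l).
  set (c := cos e').
  assert (Hc0 : 0 <= c) by (apply cos_ge_0; pose proof PI2_1; lra).
  assert (Hc1 : c < 1).
  { unfold c. rewrite <- cos_0. pose proof PI2_1; pose proof PI_RGT_0. apply cos_decreasing_1; lra. }
  exists (Rmin (e' * e') (1 - c * c)). split.
  { unfold Rmin; destruct Rle_dec; nra. }
  intros b [Hb1 Hb2].
  assert (M1 : Rmin (e' * e') (1 - c * c) <= e' * e') by apply Rmin_l.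
  assert (M2 : Rmin (e' * e') (1 - c * c) <= 1 - c * c) by apply Rmin_r.
  unfold Gam. set (d := sqrt (p*p + b*b)). set (w := sqrt (1 - (p*p + b*b))).
  assert (Ed : d * d = p*p + b*b) by (apply sqrt_sqrt; nra).
  assert (Ew : w * w = 1 - (p*p + b*b)) by (apply sqrt_sqrt; nra).
  assert (Hd0 : 0 <= d) by apply sqrt_pos. assert (Hw0 : 0 <= w) by apply sqrt_pos.
  assert (Hd1 : d <= 1) by nra.
  assert (Hdc : c < d) by nra.
  assert (Hw : w < e') by nra.
  pose proof (acos_small d e' He' Hdc Hd1). pose proof (acos_bound d).
  apply Rabs_def1; nra.
Qed.

Lemma G_zero_d p q : 1 <= p*p + q*q -> G p q = 0.
Proof. intros H. unfold G. apply RInt_zero_on. intros; apply Lf_dfar; auto. Qed.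

Lemma Phi_zero_pos p q : Rabs p < 1 -> 0 < q -> p*p + q*q < 1 -> Phi p q = 0.
Proof.
  intros Hp Hq Hd.
  set (qs := sqrt (1 - p*p)).
  assert (Hqs2 : qs * qs = 1 - p*p) by (apply sqrt_sqrt; nra).
  assert (Hqs0 : 0 <= qs) by apply sqrt_pos.
  assert (Hqs : q < qs) by (destruct (Rlt_le_dec q qs); auto; nra).
  apply Rabs_eq_0. apply Rle_antisym; [|apply Rabs_pos].
  apply Rnot_lt_le. intro Hpos. set (eps := Rabs (Phi p q)) in *.
  destruct (Gam_lim p (eps/2) ltac:(lra)) as [dl [Hdl Hg]].
  set (b := Rmax q (qs - Rmin (eps / 16) (dl / 4))).
  assert (Hm1 : 0 < Rmin (eps / 16) (dl / 4)) by (unfold Rmin; destruct Rle_dec; lra).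
  assert (Hm2 : Rmin (eps / 16) (dl / 4) <= eps/16) by apply Rmin_l.
  assert (Hm3 : Rmin (eps / 16) (dl / 4) <= dl/4) by apply Rmin_r.
  assert (Hb1 : q <= b) by (unfold b; apply Rmax_l).
  assert (Hb2 : b < qs) by (unfold b, Rmax; destruct Rle_dec; lra).
  assert (Hb3 : qs - b <= Rmin (eps / 16) (dl / 4)) by (unfold b, Rmax; destruct Rle_dec; lra).
  assert (Hbd : p*p + b*b < 1) by (assert (b*b < qs*qs) by (apply Rmult_le_0_lt_compat; lra); lra).
  assert (Hbd2 : 1 - dl < p*p + b*b).
  { assert (qs <= 1) by nra.
    assert (0 <= (qs - b) * (2 - qs - b)) by (apply Rmult_le_pos; lra).
    assert (qs*qs - b*b <= 2 * (qs - b)) by nra. lra. }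
  specialize (Hg b (conj Hbd2 Hbd)).
  assert (HG : Rabs (G p b) <= 4 * Rabs (b - qs)).
  { assert (Z : G p qs = 0) by (apply G_zero_d; lra).
    replace (G p b) with (G p b - G p qs) by (rewrite Z; ring). apply G_lip. }
  rewrite (Rabs_left1 (b - qs)) in HG by lra.
  assert (E : Phi p q = Phi p b) by (symmetry; apply Phi_const; auto).
  assert (T : Rabs (Phi p b) <= Rabs (G p b) + Rabs (Gam p b)).
  { unfold Phi, Rminus. rewrite <- (Rabs_Ropp (Gam p b)). apply Rabs_triang. }
  rewrite <- E in T. fold eps in T. lra.
Qed.

Lemma cont_mult_R (f g : R -> R) x : continuous f x -> continuous g x -> continuous (fun t => f t * g t) x.
Proof. intros. apply (continuous_mult f g); auto. Qed.
Lemma cont_plus_R (f g : R -> R) x : continuous f x -> continuous g x -> continuous (fun t => f t + g t) x.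
Proof. intros. apply (continuous_plus f g); auto. Qed.
Lemma cont_minus_R (f g : R -> R) x : continuous f x -> continuous g x -> continuous (fun t => f t - g t) x.
Proof. intros. apply (continuous_minus f g); auto. Qed.
Lemma cont_id_R x : continuous (fun t : R => t) x.
Proof. apply continuous_id. Qed.
Lemma cont_const_R (c : R) x : continuous (fun _ : R => c) x.
Proof. apply continuous_const. Qed.

Lemma Gam_cont0 p : Rabs p < 1 -> continuous (Gam p) 0.
Proof.
  intros Hp. unfold Gam.
  assert (Hq : forall x, continuous (fun q => p*p + q*q) x).
  { intros x. apply cont_plus_R; [apply cont_const_R|]. apply cont_mult_R; apply cont_id_R. }
  assert (Hs : forall x, continuous (fun q => sqrt (p*p + q*q)) x).
  { intros x. apply continuous_sqrt_comp. apply Hq. }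
  assert (Hs' : forall x, continuous (fun q => sqrt (1 - (p*p + q*q))) x).
  { intros x. apply continuous_sqrt_comp. apply cont_minus_R; [apply cont_const_R|apply Hq]. }
  apply (cont_mult_R (fun q => acos (sqrt (p*p + q*q)) - sqrt (p*p + q*q) * sqrt (1 - (p*p + q*q))) (fun _ => /2)); [|apply cont_const_R].
  apply (cont_minus_R (fun q => acos (sqrt (p*p + q*q)))).
  - apply (continuous_comp (fun q => sqrt (p*p + q*q)) acos); [apply Hs|].
    apply (@ex_derive_continuous R_AbsRing R_NormedModule). eexists. apply acos_is_derive.
    replace (p*p + 0*0) with (Rabs p * Rabs p) by (rewrite <- Rabs_mult, Rabs_right; nra).
    rewrite sqrt_square by apply Rabs_pos. pose proof (Rabs_pos p). lra.
  - apply (cont_mult_R (fun q => sqrt (p*p + q*q)) (fun q => sqrt (1 - (p*p + q*q)))); auto.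
Qed.

Lemma Phi_zero0 p : Rabs p < 1 -> Phi p 0 = 0.
Proof.
  intros Hp. apply Rabs_eq_0. apply Rle_antisym; [|apply Rabs_pos].
  apply Rnot_lt_le. intro Hpos. set (eps := Rabs (Phi p 0)) in *.
  destruct (cont_eps _ _ (Gam_cont0 p Hp) (eps/2) ltac:(lra)) as [d [Hd H]].
  assert (Hp2 : p*p < 1).
  { replace (p*p) with (Rabs p * Rabs p) by (rewrite <- Rabs_mult, Rabs_right; nra).
    pose proof (Rabs_pos p). nra. }
  set (a := Rmin (Rmin (d/2) (eps/16)) ((1 - p*p)/2)).
  assert (Ha1 : a <= d/2) by (unfold a; eapply Rle_trans; [apply Rmin_l|apply Rmin_l]).
  assert (Ha2 : a <= eps/16) by (unfold a; eapply Rle_trans; [apply Rmin_l|apply Rmin_r]).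
  assert (Ha3 : a <= (1 - p*p)/2) by (unfold a; apply Rmin_r).
  assert (Ha0 : 0 < a) by (unfold a, Rmin; repeat destruct Rle_dec; lra).
  assert (0 <= p*p) by nra.
  assert (a*a <= a * ((1-p*p)/2)) by (apply Rmult_le_compat_l; lra).
  assert (a * ((1-p*p)/2) <= /2 * ((1-p*p)/2)) by (apply Rmult_le_compat_r; lra).
  assert (Had : p*p + a*a < 1) by lra.
  pose proof (Phi_zero_pos p a Hp Ha0 Had) as Z.
  assert (HG : Rabs (G p 0 - G p a) <= 4 * Rabs (0 - a)) by apply G_lip.
  rewrite (Rabs_left (0 - a)) in HG by lra.
  assert (HGam : Rabs (Gam p a - Gam p 0) < eps/2) by (apply H; rewrite Rminus_0_r, Rabs_right; lra).
  assert (T : Rabs (Phi p 0) <= Rabs (G p 0 - G p a) + Rabs (Gam p a - Gam p 0)).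
  { replace (Phi p 0) with ((G p 0 - G p a) + (Gam p a - Gam p 0)).
    apply Rabs_triang. unfold Phi in *. lra. }
  fold eps in T. lra.
Qed.
Lemma G_abs p q : G p q = G p (Rabs q).
Proof. unfold G. apply RInt_ext. intros; unfold Lf; rewrite core_abs; reflexivity. Qed.

Lemma G_formula p q : G p q = PI / 4 * euclid_hat (sqrt (p*p + q*q)).
Proof.
  pose proof PI_RGT_0 as HPI.
  assert (Hd0 : 0 <= p*p + q*q) by nra.
  set (d := sqrt (p*p + q*q)).
  assert (Ed : d * d = p*p + q*q) by (apply sqrt_sqrt; lra).
  assert (Hdp : 0 <= d) by apply sqrt_pos.
  destruct (Rle_lt_dec 1 (p*p + q*q)) as [H1|H1].
  - rewrite G_zero_d by auto. unfold euclid_hat. destruct (Rle_dec d 1) as [h|h]; [|ring].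
    assert (d = 1) by nra. fold d. rewrite H, acos_1.
    replace (1 - 1 ^ 2) with 0 by ring. rewrite sqrt_0. ring.
  - assert (Hp : Rabs p < 1).
    { destruct (Rlt_le_dec (Rabs p) 1) as [h|h]; auto.
      assert (Rabs p * Rabs p = p * p) by (rewrite <- Rabs_mult, Rabs_right; nra). nra. }
    rewrite G_abs.
    assert (Eq : Rabs q * Rabs q = q * q) by (rewrite <- Rabs_mult, Rabs_right; nra).
    assert (HPhi : Phi p (Rabs q) = 0).
    { destruct (Req_dec (Rabs q) 0) as [h|h].
      - rewrite h. apply Phi_zero0; auto.
      - apply Phi_zero_pos; auto. pose proof (Rabs_pos q); lra. lra. }
    unfold Phi in HPhi. assert (E : G p (Rabs q) = Gam p (Rabs q)) by lra. rewrite E.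
    unfold Gam, euclid_hat. rewrite Eq. fold d.
    destruct (Rle_dec d 1) as [h|h]; [|exfalso; nra].
    replace (d ^ 2) with (p*p + q*q) by (rewrite <- Ed; ring).
    field. lra.
Qed.
Lemma is_RInt_unique_eq (f : R -> R) a b l : is_RInt f a b l -> forall l', l = l' -> is_RInt f a b l'.
Proof. intros H l' <-; exact H. Qed.

Lemma is_RInt_sumR n (f : nat -> R -> R) (I : nat -> R) a b :
  (forall k, (k < n)%nat -> is_RInt (f k) a b (I k)) ->
  is_RInt (fun t => sumR n (fun k => f k t)) a b (sumR n I).
Proof.
  induction n; intros H; simpl.
  - pose proof (@is_RInt_const R_NormedModule a b 0) as C.
    apply (is_RInt_unique_eq _ _ _ _ C). unfold scal; simpl; unfold mult; simpl; ring.
  - pose proof (@is_RInt_plus R_NormedModule _ _ a b _ _ (IHn ltac:(intros; apply H; lia)) (H n ltac:(lia))) as P.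
    exact P.
Qed.

Lemma is_RInt_scalR (f : R -> R) a b k If : is_RInt f a b If -> is_RInt (fun t => k * f t) a b (k * If).
Proof. intros H. apply (@is_RInt_scal R_NormedModule f a b k If H). Qed.

Definition ovT (x : nat -> R * R) (i j : nat) (t : R) : R :=
  ovl (snd (x i)) (sq (t - fst (x i))) (snd (x j)) (sq (t - fst (x j))).

Lemma ovT_Lf x i j t : ovT x i j t =
  Lf (fst (x j) - fst (x i)) (snd (x j) - snd (x i)) (t - fst (x i)).
Proof.
  unfold ovT, Lf. rewrite ovl_core by apply sq_pos.
  replace (t - fst (x i) - (fst (x j) - fst (x i))) with (t - fst (x j)) by ring. reflexivity.
Qed.

Lemma RInt_shift (f : R -> R) a b c : ex_RInt f (a - c) (b - c) ->
  RInt (fun t => f (t - c)) a b = RInt f (a - c) (b - c).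
Proof.
  intros H. pose proof (@RInt_comp_lin R_CompleteNormedModule f 1 (- c) a b) as E.
  replace (1 * a + - c) with (a - c) in E by ring. replace (1 * b + - c) with (b - c) in E by ring.
  rewrite <- E by exact H. apply RInt_ext. intros y _. unfold scal; simpl; unfold mult; simpl.
  replace (1 * y + - c) with (y - c) by ring. ring.
Qed.

Lemma G_domain p q a b : a <= -2 -> 2 <= b -> RInt (Lf p q) a b = G p q.
Proof.
  intros Ha Hb. unfold G. rewrite (RInt_split3 (Lf p q) a (-2) 2 b) by (apply ex_Lf || lra).
  assert (Z1 : RInt (Lf p q) a (-2) = 0).
  { apply RInt_zero_on. intros t Ht. rewrite Rmin_left, Rmax_right in Ht by lra. apply Lf_far. nra. }
  assert (Z2 : RInt (Lf p q) 2 b = 0).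
  { apply RInt_zero_on. intros t Ht. rewrite Rmin_left, Rmax_right in Ht by lra. apply Lf_far. nra. }
  rewrite Z1, Z2, Rplus_0_l, Rplus_0_r. reflexivity.
Qed.

Lemma pair_int x i j M : 2 + Rabs (fst (x i)) <= M ->
  is_RInt (ovT x i j) (-M) M (PI / 4 * euclid_hat (dist2 (x i) (x j))).
Proof.
  intros HM.
  set (p := fst (x j) - fst (x i)). set (q := snd (x j) - snd (x i)). set (a := fst (x i)).
  assert (Hex : ex_RInt (ovT x i j) (-M) M).
  { apply (@ex_RInt_continuous R_CompleteNormedModule). intros z _.
    apply (continuous_ext (fun t => Lf p q (t - a))). { intros; rewrite ovT_Lf; reflexivity. }
    apply (continuous_comp (fun t => t - a) (Lf p q)); [|apply cont_Lf].
    apply cont_minus_R; [apply cont_id_R|apply cont_const_R]. }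
  assert (Ha : Rabs a <= M - 2) by (unfold a; lra).
  apply Rabs_le_inv in Ha.
  replace (PI / 4 * euclid_hat (dist2 (x i) (x j))) with (RInt (ovT x i j) (-M) M).
  { apply (@RInt_correct R_CompleteNormedModule); auto. }
  rewrite (RInt_ext (ovT x i j) (fun t => Lf p q (t - a))) by (intros; apply ovT_Lf).
  rewrite RInt_shift by apply ex_Lf.
  rewrite G_domain by lra. rewrite G_formula. f_equal. f_equal. unfold dist2. f_equal.
  unfold p, q. ring.
Qed.

Lemma ovT_self x i t : ovT x i i t = 2 * sq (t - fst (x i)).
Proof. unfold ovT. apply ovl_self, sq_pos. Qed.

Lemma dist2_self a : dist2 a a = 0.
Proof. unfold dist2. replace ((fst a - fst a)^2 + (snd a - snd a)^2) with 0 by ring. apply sqrt_0. Qed.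

Lemma euclid_hat_0 : euclid_hat 0 = 1.
Proof.
  unfold euclid_hat. destruct (Rle_dec 0 1); [|lra]. rewrite acos_0.
  pose proof PI_RGT_0. field. lra.
Qed.

Definition Qs (n : nat) (sg : nat -> R) (x : nat -> R * R) :=
  sumR n (fun i => sumR n (fun j => sg i * sg j * euclid_hat (dist2 (x i) (x j)))).

Lemma Q_ge n sg x : spins n sg -> sumR n sg <= Qs n sg x.
Proof.
  intros Hs.
  set (M := 2 + sumR n (fun i => Rabs (fst (x i)))).
  assert (HM : forall i, (i < n)%nat -> 2 + Rabs (fst (x i)) <= M).
  { intros i Hi. unfold M. pose proof (sumR_term_le n (fun i => Rabs (fst (x i))) i ltac:(intros; apply Rabs_pos) Hi). lra. }
  assert (HL : is_RInt (fun t => sumR n (fun i => sg i * ovT x i i t)) (-M) M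
                 (sumR n (fun i => sg i * (PI / 4 * euclid_hat (dist2 (x i) (x i)))))).
  { apply is_RInt_sumR. intros k Hk. apply is_RInt_scalR, pair_int; auto. }
  assert (HR : is_RInt (fun t => sumR n (fun i => sumR n (fun j => sg i * sg j * ovT x i j t))) (-M) M
                 (sumR n (fun i => sumR n (fun j => sg i * sg j * (PI / 4 * euclid_hat (dist2 (x i) (x j))))))).
  { apply is_RInt_sumR. intros k Hk. apply is_RInt_sumR. intros l Hl. apply is_RInt_scalR, pair_int; auto. }
  assert (HMM : - M <= M).
  { unfold M; pose proof (sumR_nonneg n (fun i => Rabs (fst (x i))) ltac:(intros; apply Rabs_pos)); lra. }
  assert (Hle := is_RInt_le _ _ (-M) M _ _ HMM HL HR).
  assert (Hpt : forall t, sumR n (fun i => sg i * ovT x i i t) <= sumR n (fun i => sumR n (fun j => sg i * sg j * ovT x i j t))).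
  { intros t. rewrite (sumR_ext n _ (fun i => sg i * (2 * sq (t - fst (x i))))) by (intros; rewrite ovT_self; reflexivity).
    apply (one_d n sg (fun i => snd (x i)) (fun i => sq (t - fst (x i))) Hs). intros; apply sq_pos. }
  specialize (Hle (fun t _ => Hpt t)).
  rewrite (sumR_ext n _ (fun i => PI / 4 * sg i)) in Hle by (intros; rewrite dist2_self, euclid_hat_0; ring).
  rewrite sumR_scal in Hle.
  rewrite (sumR_ext n (fun i => sumR n (fun j => sg i * sg j * (PI / 4 * euclid_hat (dist2 (x i) (x j)))))
     (fun i => PI / 4 * sumR n (fun j => sg i * sg j * euclid_hat (dist2 (x i) (x j))))) in Hle.
  2:{ intros. rewrite <- sumR_scal. apply sumR_ext; intros; ring. }
  rewrite sumR_scal in Hle. fold (Qs n sg x) in Hle.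
  pose proof PI_RGT_0. apply (Rmult_le_reg_l (PI/4)); lra.
Qed.
Lemma dist2_sym a b : dist2 a b = dist2 b a.
Proof. unfold dist2. f_equal. ring. Qed.

Lemma Q_U n sg x : spins n sg -> Qs n sg x = 2 * U euclid_hat n sg x + INR n.
Proof.
  intros Hs. unfold Qs, U. rewrite sumR_sym.
  - f_equal. rewrite (sumR_ext n _ (fun _ => 1)); [rewrite sumR_const; ring|].
    intros i Hi. rewrite dist2_self, euclid_hat_0. destruct (Hs i Hi) as [-> | ->]; ring.
  - intros i j. rewrite dist2_sym. ring.
Qed.

Lemma spins_opp n sg : spins n sg -> spins n (fun i => - sg i).
Proof. intros H i Hi. destruct (H i Hi) as [-> | ->]; [right|left]; ring. Qed.

Lemma sumR_opp n f : sumR n (fun i => - f i) = - sumR n f.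
Proof. induction n; simpl; [ring|]. rewrite IHn; ring. Qed.

Lemma Q_abs n sg x : spins n sg -> Rabs (sumR n sg) <= Qs n sg x.
Proof.
  intros Hs. pose proof (Q_ge n sg x Hs) as H1.
  pose proof (Q_ge n (fun i => - sg i) x (spins_opp n sg Hs)) as H2.
  rewrite sumR_opp in H2.
  assert (E : Qs n (fun i => - sg i) x = Qs n sg x).
  { unfold Qs. apply sumR_ext; intros. apply sumR_ext; intros. ring. }
  rewrite E in H2. unfold Rabs; destruct Rcase_abs; lra.
Qed.

Lemma spins_int n sg : spins n sg -> exists z, sumR n sg = IZR z.
Proof. intros H. apply sumR_int. intros i Hi. destruct (H i Hi) as [-> | ->]; [exists 1%Z|exists (-1)%Z]; reflexivity. Qed.

Lemma Q_same n sg x : (forall i j, (i < n)%nat -> (j < n)%nat -> x i = x j) ->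
  Qs n sg x = sumR n sg * sumR n sg.
Proof.
  intros Hx. unfold Qs. rewrite sumR_mult. apply sumR_ext; intros i Hi. apply sumR_ext; intros j Hj.
  rewrite (Hx i j Hi Hj), dist2_self, euclid_hat_0. ring.
Qed.

Theorem corollary2p7 :
  is_inf (energy_set euclid_hat) (-1/2) /\
  is_inf (mod_energy_set euclid_hat) (-1/2) /\
  (forall n sigma (x : nat -> R * R), (2 <= n)%nat -> Nat.Even n -> spins n sigma ->
     sumR n sigma = 0 -> (forall i j, (i < n)%nat -> (j < n)%nat -> x i = x j) ->
     U euclid_hat n sigma x / INR n = -1/2) /\
  (forall n sigma (x : nat -> R * R), (2 <= n)%nat -> Nat.Odd n -> spins n sigma ->
     Rabs (sumR n sigma) = 1 -> (forall i j, (i < n)%nat -> (j < n)%nat -> x i = x j) ->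
     U euclid_hat n sigma x / (INR n - 1) = -1/2).
Proof.
  assert (Hn2 : forall n, (2 <= n)%nat -> 2 <= INR n).
  { intros n Hn. replace 2 with (INR 2) by (simpl; ring). apply le_INR; auto. }
  split; [|split; [|split]].
  - split.
    + intros y [n [sg [x [Hn [Hs ->]]]]].
      pose proof (Q_abs n sg x Hs) as H. rewrite Q_U in H by auto. pose proof (Rabs_pos (sumR n sg)).
      pose proof (Hn2 n Hn).
      apply (Rmult_le_reg_r (INR n)); [lra|].
      replace (U euclid_hat n sg x / INR n * INR n) with (U euclid_hat n sg x) by (field; lra). lra.
    + intros m' Hm. apply Hm.
      exists 2%nat, (fun i => match i with O => 1 | _ => -1 end), (fun _ => (0, 0)).
      split; [lia|split].
      * intros i Hi. destruct i; [left|right]; reflexivity.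
      * unfold U. simpl. rewrite dist2_self, euclid_hat_0. field.
  - split.
    + intros y [n [sg [x [Hn [Hs [Hnz ->]]]]]].
      pose proof (Q_abs n sg x Hs) as H. rewrite Q_U in H by auto.
      destruct (spins_int n sg Hs) as [z Hz]. rewrite Hz in Hnz, H.
      pose proof (int_abs_ge1 z Hnz). pose proof (Hn2 n Hn).
      apply (Rmult_le_reg_r (INR n - 1)); [lra|].
      replace (U euclid_hat n sg x / (INR n - 1) * (INR n - 1)) with (U euclid_hat n sg x) by (field; lra). lra.
    + intros m' Hm. apply Hm.
      exists 3%nat, (fun i => match i with 1%nat => -1 | _ => 1 end), (fun _ => (0, 0)).
      split; [lia|split; [|split]].
      * intros i Hi. destruct i as [|[|i]]; [left|right|left]; reflexivity.
      * simpl. lra.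
      * unfold U. simpl. rewrite dist2_self, euclid_hat_0. field.
  - intros n sg x Hn _ Hs Hsum Hx.
    pose proof (Q_U n sg x Hs) as E. rewrite Q_same, Hsum in E by auto.
    pose proof (Hn2 n Hn). apply (Rmult_eq_reg_r (INR n)); [|lra].
    replace (U euclid_hat n sg x / INR n * INR n) with (U euclid_hat n sg x) by (field; lra). lra.
  - intros n sg x Hn _ Hs Hsum Hx.
    pose proof (Q_U n sg x Hs) as E. rewrite Q_same in E by auto.
    assert (Hsq : sumR n sg * sumR n sg = 1).
    { unfold Rabs in Hsum; destruct Rcase_abs; nra. }
    rewrite Hsq in E.
    pose proof (Hn2 n Hn). apply (Rmult_eq_reg_r (INR n - 1)); [|lra].
    replace (U euclid_hat n sg x / (INR n - 1) * (INR n - 1)) with (U euclid_hat n sg x) by (field; lra). lra.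
Qed.
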